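(* Let $d\ge1$, let $b:\mathbb{R}^d\to\mathbb{R}$ be continuous and bounded, and let $R>0$ be such that (1) $b$ is not constant on $\{x\in\mathbb{R}^d:|x|\le R\}$, and (2) for every $x\in\mathbb{R}^d$ with $|x|>R$ there is $z\in\mathbb{R}^d$ with $|z|\le R$ such that $b(x+y)=b(z+y)$ for all $y\in\mathbb{R}^d$. Then there is $M>0$ such that \[ \inf_{x\in\mathbb{R}^d}\int_{|y|\le M}\int_{|\overline y|\le M}|b(x+y)-b(x+\overline y)|^2\,\mathrm{d}y\,\mathrm{d}\overline y>0. \]
   Context: $|x|$ denotes the Euclidean norm on $\mathbb{R}^d$; integrals are with respect to Lebesgue measure on $\mathbb{R}^d$. *)

(* Defs.v *)
From HB Require Import structures.
From mathcomp Require Import all_boot all_order all_algebra.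
From mathcomp Require Import all_classical all_reals all_analysis.
Set Implicit Arguments. Unset Strict Implicit. Unset Printing Implicit Defensive.
Import Order.TTheory GRing.Theory Num.Theory.
Import numFieldNormedType.Exports.
Local Open Scope ring_scope.

Definition enorm (R : realType) (d : nat) (x : 'rV[R]_d) : R :=
  Num.sqrt (\sum_(i < d) x ord0 i ^+ 2).

(* Integral of an extended-real function over R^d w.r.t. Lebesgue measure,
   computed as the iterated one-dimensional Lebesgue integral
   (for nonnegative measurable integrands this coincides, by Tonelli,
   with the integral w.r.t. d-dimensional Lebesgue measure). *)
Fixpoint lebint (R : realType) (d : nat) : ('rV[R]_d -> \bar R) -> \bar R :=
  match d with
  | 0 => fun f => f 0
  | d'.+1 => fun f =>
      (\int[@lebesgue_measure R]_(t in [set: R])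
         lebint (fun v : 'rV[R]_d' => f (row_mx (\row_(j < 1) t) v)))%E
  end.

Definition Jint (R : realType) (d : nat) (b : 'rV[R]_d -> R) (M : R)
    (x : 'rV[R]_d) : \bar R :=
  lebint (fun y : 'rV[R]_d =>
    lebint (fun y' : 'rV[R]_d =>
      if (enorm y <= M) && (enorm y' <= M)
      then ((`|b (x + y) - b (x + y')| ^+ 2)%:E)%E
      else 0%E)).

(* Main.v *)
Require Import Defs.
From HB Require Import structures.
From mathcomp Require Import all_boot all_order all_algebra.
From mathcomp Require Import all_classical all_reals all_analysis.
From mathcomp Require Import lra ring.
Import Order.TTheory GRing.Theory Num.Theory.
Import numFieldNormedType.Exports.
Local Open Scope classical_set_scope.
Local Open Scope ring_scope.

Lemma le_int_nm (R : realType) (f g : R -> \bar R) :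
  (forall x, (0 <= g x)%E) -> (forall x, (g x <= f x)%E) ->
  (\int[@lebesgue_measure R]_(x in [set: R]) g x <=
   \int[@lebesgue_measure R]_(x in [set: R]) f x)%E.
Proof.
move=> g0 gf.
have f0 : forall x, (0 <= f x)%E by move=> x; exact: le_trans (g0 x) (gf x).
rewrite !ge0_integralTE//.
apply: ge_ereal_sup => _ [h hg <-]; apply: ereal_sup_ubound.
by exists h => // x; exact: le_trans (hg x) (gf x).
Qed.

Lemma int_lb (R : realType) (f : R -> \bar R) (c s K : R) :
  0 < s -> 0 <= K -> (forall x, (0 <= f x)%E) ->
  (forall t, `|t - c| < s -> (K%:E <= f t)%E) ->
  ((K * (2 * s))%:E <=
   \int[@lebesgue_measure R]_(x in [set: R]) f x)%E.
Proof.
move=> s0 K0 f0 fK.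
pose A := `](c - s), (c + s)[%classic.
have mA : measurable A by exact: measurable_itv.
apply: le_trans (@le_int_nm R f (fun x => (K * \1_A x)%:E) _ _).
- have H := (@integralZl_indic _ _ _ (@lebesgue_measure R) _ measurableT (fun=> A) K _ mA).
  rewrite /= in H; rewrite H; last by move=> Kn; have := lt_le_trans Kn K0; rewrite ltxx.
  rewrite integral_indic // setIT /A. have HH := lebesgue_measure_itv `](c - s), (c + s)[. rewrite /= lte_fin ifT in HH; last lra.
  rewrite [X in (_ * X)%E](_ : _ = ((c + s) - (c - s))%:E); last exact: HH.
  rewrite -EFinM lee_fin (_ : c + s - (c - s) = 2 * s) //; lra.
- by move=> x; rewrite lee_fin mulr_ge0.
- move=> x; rewrite indicE; case: (boolP (x \in A)) => xA; last by rewrite mulr0.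
  rewrite mulr1; apply: fK; move: xA; rewrite inE /A /= in_itv /= => /andP[h1 h2].
  rewrite ltr_norml; apply/andP; split; lra.
Qed.

Lemma box_lb (R : realType) (d : nat) : forall (c : 'rV[R]_d) (s k : R)
  (f : 'rV[R]_d -> \bar R), 0 < s -> 0 <= k -> (forall v, (0 <= f v)%E) ->
  (forall v : 'rV[R]_d, (forall i, `|v ord0 i - c ord0 i| < s) -> (k%:E <= f v)%E) ->
  ((k * (2 * s) ^+ d)%:E <= lebint f)%E.
Proof.
elim: d => [|d IH] c s k f s0 k0 f0 fk /=.
  by rewrite expr0 mulr1; apply: fk => -[].
rewrite exprSr mulrA.
apply: (@int_lb R _ (c ord0 ord0)) => //.
- by rewrite mulr_ge0 // exprn_ge0 // mulr_ge0 // ltW.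
- move=> t; have := IH 0 1 0 (fun v : 'rV[R]_d => f (row_mx (\row_(j < 1) t) v)) ltr01 (le_refl _)
    (fun v : 'rV[R]_d => f0 _) (fun (v : 'rV[R]_d) _ => f0 _).
  by rewrite mul0r.
- move=> t ht.
  apply: (IH (\row_(j < d) c ord0 (rshift 1 j))) => // v hv.
  apply: fk => i; rewrite mxE; case: splitP => j Hj.
  + rewrite mxE; have -> : i = ord0 by apply/val_inj; rewrite /= Hj; case: j {Hj} => -[].
    by [].
  + have -> : i = rshift 1 j by apply/val_inj.
    by have := hv j; rewrite mxE.
Qed.

Lemma enorm_entry (R : realType) d (v : 'rV[R]_d) i : `|v ord0 i| <= enorm v.
Proof.
rewrite /enorm -sqrtr_sqr ler_sqrt; last by rewrite sumr_ge0 // => j _; exact: sqr_ge0.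
rewrite (bigD1 i) //= lerDl sumr_ge0 // => j _; exact: sqr_ge0.
Qed.

Lemma enorm_le (R : realType) d (v : 'rV[R]_d) (B : R) : 0 <= B ->
  (forall i, `|v ord0 i| <= B) -> enorm v <= d%:R * B.
Proof.
move=> B0 hB; rewrite /enorm -(ger0_norm (mulr_ge0 (ler0n _ d) B0)) -sqrtr_sqr.
rewrite ler_sqrt; last exact: sqr_ge0.
apply: (@le_trans _ _ (\sum_(i < d) B ^+ 2)).
  apply: ler_sum => i _; rewrite -real_normK ?num_real //.
  by rewrite ler_sqr ?nnegrE // hB.
rewrite sumr_const card_ord exprMn -[B ^+ 2 *+ d]mulr_natr mulrC ler_wpM2r ?sqr_ge0 //.
by rewrite -natrX ler_nat; case: d {v hB} => // n; rewrite expnS leq_pmulr.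
Qed.

Lemma lebint_ge0 (R : realType) d (f : 'rV[R]_d -> \bar R) :
  (forall v, (0 <= f v)%E) -> (0 <= lebint f)%E.
Proof.
move=> f0; have := @box_lb R d 0 1 0 f ltr01 (le_refl _) f0 (fun v _ => f0 v).
by rewrite mul0r.
Qed.

Lemma cont_box (R : realType) d (b : 'rV[R]_d -> R) (x0 : 'rV[R]_d) (e : R) :
  continuous b -> 0 < e -> exists2 r, 0 < r &
  forall u : 'rV[R]_d, (forall i, `|u ord0 i - x0 ord0 i| < r) -> `|b u - b x0| < e.
Proof.
move=> hb e0; have := hb x0; move=> /cvgrPdist_lt/(_ e e0) /nbhs_ballP [r r0 H].
exists r => // u hu; rewrite distrC; apply: H; split => // i j.
by rewrite (ord1 i) /ball /= distrC; exact: hu.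
Qed.

Lemma sep_lb (R : realType) (a c p q : R) :
  `|p - a| < `|a - c| / 4 -> `|q - c| < `|a - c| / 4 -> `|a - c| / 2 <= `|p - q|.
Proof.
case: (lerP 0 (a - c)) => h; [rewrite (ger0_norm h) | rewrite (ltr0_norm h)];
rewrite !ltr_norml => /andP[h1 h2] /andP[h3 h4];
(case: (lerP 0 (p - q)) => h'; [rewrite (ger0_norm h') | rewrite (ltr0_norm h')]); lra.
Qed.

Theorem lemma4p3 (R : realType) (d : nat) (b : 'rV[R]_d -> R) (Rad : R) :
  (0 < d)%N ->
  continuous b ->
  (exists C : R, forall x, `|b x| <= C) ->
  0 < Rad ->
  (exists x1 x2 : 'rV[R]_d,
      [/\ enorm x1 <= Rad, enorm x2 <= Rad & b x1 != b x2]) ->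
  (forall x : 'rV[R]_d, Rad < enorm x ->
     exists z : 'rV[R]_d, enorm z <= Rad /\ forall y, b (x + y) = b (z + y)) ->
  exists M : R, 0 < M /\
    (0 < ereal_inf [set Jint b M x | x in [set: 'rV[R]_d]])%E.
Proof.
move=> d0 hb _ R0 [x1 [x2 [n1 n2 neq]]] hper.
have dp : 0 < `|b x1 - b x2| by rewrite normr_gt0 subr_eq0.
have e0 : 0 < `|b x1 - b x2| / 4 by rewrite divr_gt0.
have [r1 r1p H1] := @cont_box R d b x1 _ hb e0.
have [r2 r2p H2] := @cont_box R d b x2 _ hb e0.
pose s := Num.min r1 (Num.min r2 1).
have s0 : 0 < s by rewrite !lt_min r1p r2p ltr01.
have sr1 : s <= r1 by rewrite ge_min le_refl.
have sr2 : s <= r2 by rewrite !ge_min le_refl orbT.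
have s1 : s <= 1 by rewrite !ge_min le_refl !orbT.
pose K := (`|b x1 - b x2| / 2) ^+ 2.
have K0 : 0 < K by rewrite exprn_gt0 // divr_gt0.
pose M := d%:R * (2 * Rad + 1).
pose L := K * (2 * s) ^+ d * (2 * s) ^+ d.
have L0 : 0 < L by rewrite !mulr_gt0 // exprn_gt0 // mulr_gt0.
have key : forall x, enorm x <= Rad -> (L%:E <= Jint b M x)%E.
  move=> x hx; rewrite /Jint.
  have inM : forall (y c : 'rV[R]_d), enorm c <= Rad ->
      (forall i, `|y ord0 i - (c - x) ord0 i| < s) -> enorm y <= M.
    move=> y c hc hy; apply: enorm_le => [|i]; first lra.
    have := hy i; rewrite !mxE => hyi.
    have hci := @enorm_entry R d c i; have hxi := @enorm_entry R d x i.
    move: hyi hci hxi; rewrite ltr_norml !ler_norml => /andP[a1 a2] /andP[a3 a4] /andP[a5 a6].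
    apply/andP; split; lra.
  apply: (@box_lb R d (x1 - x) s (K * (2 * s) ^+ d)) => //.
  - by rewrite mulr_ge0 ?exprn_ge0 ?mulr_ge0 // ltW.
  - move=> y; apply: lebint_ge0 => y'; case: ifP => _ //; by rewrite lee_fin sqr_ge0.
  move=> y hy; apply: (@box_lb R d (x2 - x) s K) => //; first exact: ltW.
    move=> y'; case: ifP => _ //; by rewrite lee_fin sqr_ge0.
  move=> y' hy'.
  rewrite (inM y x1) // (inM y' x2) //= lee_fin.
  rewrite -real_normK ?num_real // ler_sqr ?nnegrE ?divr_ge0 //.

  rewrite normr_id; apply: sep_lb.
    apply: H1 => i; rewrite mxE; move: (hy i); rewrite !mxE => h.
    apply: (lt_le_trans _ sr1); move: h; congr (`|_| < _); ring.
  apply: H2 => i; rewrite mxE; move: (hy' i); rewrite !mxE => h.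
  apply: (lt_le_trans _ sr2); move: h; congr (`|_| < _); ring.
exists M; split.
  by rewrite mulr_gt0 ?ltr0n //; lra.
apply: (@lt_le_trans _ _ L%:E); first by rewrite lte_fin.
apply/ereal_infP => _ [x _ <-].
case: (lerP (enorm x) Rad) => hx; first exact: key.
have [z [hz hzb]] := hper x hx.
have -> : Jint b M x = Jint b M z.
  rewrite /Jint; congr lebint; apply: funext => y; congr lebint.
  by apply: funext => y'; rewrite !hzb.
exact: key.
Qed.
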